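(* Let $A,B,C$ be logically independent events. Given $(x,y)\in[0,1]^2$, the assessment $P(C|AB)=x$, $P(B|A)=y$, $P(C|A)=z$ is coherent if and only if \[ xy\le z\le xy+1-y . \] Consequently, if $0\le\alpha_i\le\beta_i\le1$ ($i=1,2$), the set of values $z$ for which there exist $x\in[\alpha_1,\beta_1]$, $y\in[\alpha_2,\beta_2]$ making $(x,y,z)$ a coherent assessment on $(C|AB,B|A,C|A)$ is exactly $[\alpha_3,\beta_3]$ with $\alpha_3=\alpha_1\alpha_2$ and $\beta_3=\beta_1\alpha_2+1-\alpha_2$.
   Context: Events are elements of a Boolean algebra; $AB$ denotes conjunction, $A\vee B$ disjunction, $A^c$ negation. $A,B,C$ are logically independent if all eight conjunctions $A^{*}B^{*}C^{*}$ (each $X^{*}\in\{X,X^c\}$) are possible (nonempty). A conditional event $E|H$ requires $H\neq\emptyset$; conditional probabilities are treated as primitive (no requirement that $P(H)>0$). Coherence (de Finetti): an assessment $(p_1,\dots,p_n)$ on conditional events $E_1|H_1,\dots,E_n|H_n$ is coherent if for every nonempty $J\subseteq\{1,\dots,n\}$ and every real numbers $s_j$ ($j\in J$), the random gain $G=\sum_{j\in J}s_j\,I_{H_j}(I_{E_j}-p_j)$ (with $I$ denoting indicator functions) satisfies $\max G\ge 0$, where the maximum is taken over the possible worlds (atoms) contained in $\bigvee_{j\in J}H_j$. *)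

(* Defs.v *)
(* Events are modelled as subsets (boolean predicates) of a
   nonempty-or-not type Omega of possible worlds (a field of sets; by Stone
   every Boolean algebra arises this way). *)
From HB Require Import structures.
From mathcomp Require Import all_boot all_order all_algebra.
From mathcomp Require Import reals.
Set Implicit Arguments. Unset Strict Implicit. Unset Printing Implicit Defensive.
Import Order.TTheory GRing.Theory Num.Theory.
Local Open Scope ring_scope.

Definition event (Omega : Type) := Omega -> bool.

Definition logically_independent (Omega : Type) (A B C : event Omega) : Prop :=
  forall a b c : bool, exists w : Omega, [&& A w == a, B w == b & C w == c].

Definition Ind (R : ringType) (b : bool) : R := if b then 1 else 0.

(* Coherence (de Finetti) of the assessment p on the conditional events
   E_j | H_j, j : 'I_n.  Each H_j must be nonempty (conditional event is
   well-defined); for every nonempty J and real stakes s, the random gain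
   G = sum_{j in J} s_j I_{H_j} (I_{E_j} - p_j) has a nonnegative value at
   some possible world in the disjunction of the H_j, j in J (G takes finitely
   many values on those worlds, so this is "max G >= 0"). *)
Definition coherent (R : realType) (Omega : Type) (n : nat)
    (E H : 'I_n -> event Omega) (p : 'I_n -> R) : Prop :=
  (forall j, exists w, H j w) /\
  forall (J : {set 'I_n}) (s : 'I_n -> R), J != set0 ->
    exists w : Omega, [exists j in J, H j w] &&
      (0 <= \sum_(j in J) s j * Ind R (H j w) * (Ind R (E j w) - p j)).

Definition famE (Omega : Type) (A B C : event Omega) (i : 'I_3) : event Omega :=
  match val i with 0 => C | 1 => B | _ => C end.
Definition famH (Omega : Type) (A B C : event Omega) (i : 'I_3) : event Omega :=
  match val i with 0 => (fun w => A w && B w) | _ => A end.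
Definition famP (R : realType) (x y z : R) (i : 'I_3) : R :=
  match val i with 0 => x | 1 => y | _ => z end.

(* Main.v *)
Require Import Defs.
From HB Require Import structures.
From mathcomp Require Import all_boot all_order all_algebra.
From mathcomp Require Import reals.
From mathcomp Require Import ring lra.
Import Order.TTheory GRing.Theory Num.Theory.
Local Open Scope ring_scope.
Lemma avg4 (R : realType) (p1 p2 p3 p4 g1 g2 g3 g4 : R) :
  0 <= p1 -> 0 <= p2 -> 0 <= p3 -> 0 <= p4 -> p1 + p2 + p3 + p4 = 1 ->
  p1 * g1 + p2 * g2 + p3 * g3 + p4 * g4 = 0 ->
  [|| 0 <= g1, 0 <= g2, 0 <= g3 | 0 <= g4].
Proof.
move=> h1 h2 h3 h4 hs he.
case: (lerP 0 g1) => //= l1; case: (lerP 0 g2) => //= l2;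
case: (lerP 0 g3) => //= l3; case: (lerP 0 g4) => //= l4.
exfalso.
have q1 : p1 * g1 <= 0 by rewrite mulr_ge0_le0 // ltW.
have q2 : p2 * g2 <= 0 by rewrite mulr_ge0_le0 // ltW.
have q3 : p3 * g3 <= 0 by rewrite mulr_ge0_le0 // ltW.
have q4 : p4 * g4 <= 0 by rewrite mulr_ge0_le0 // ltW.
case: (lerP p1 0) => e1; first case: (lerP p2 0) => e2; first case: (lerP p3 0) => e3;
  first case: (lerP p4 0) => e4; try lra.
- have : p4 * g4 < 0 by rewrite pmulr_rlt0.
  lra.
- have : p3 * g3 < 0 by rewrite pmulr_rlt0.
  lra.
- have : p2 * g2 < 0 by rewrite pmulr_rlt0.
  lra.
- have : p1 * g1 < 0 by rewrite pmulr_rlt0.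
  lra.
Qed.
Lemma gainE (R: realType) Omega (A B C : event Omega) (x y z : R) (J : {set 'I_3}) s w :
 \sum_(j in J) s j * Ind R (famH A B C j w) * (Ind R (famE A B C j w) - famP x y z j)
 = (if ord0 \in J then s ord0 else 0) * Ind R (A w && B w) * (Ind R (C w) - x)
 + (if inord 1 \in J then s (inord 1) else 0) * Ind R (A w) * (Ind R (B w) - y)
 + (if inord 2 \in J then s (inord 2) else 0) * Ind R (A w) * (Ind R (C w) - z).
Proof.
rewrite big_mkcond /= !big_ord_recl big_ord0 addr0 addrA.
have -> : lift ord0 ord0 = inord 1 :> 'I_3 by apply: val_inj; rewrite /= inordK.
have -> : lift ord0 (lift ord0 (@ord0 0)) = inord 2 :> 'I_3 by apply: val_inj; rewrite /= inordK.
rewrite /famH /famE /famP /= !inordK //.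
by case: (_ \in J); case: (_ \in J); case: (_ \in J); rewrite ?mul0r.
Qed.

Lemma suff_key (R : realType) (x y z t0 t1 t2 : R) :
  0 <= x <= 1 -> 0 <= y <= 1 -> x * y <= z <= x * y + 1 - y ->
  exists b c : bool, 0 <= t0 * Ind R b * (Ind R c - x) + t1 * (Ind R b - y) + t2 * (Ind R c - z).
Proof.
move=> /andP[x0 x1] /andP[y0 y1] /andP[z0 z1].
have := @avg4 R (x*y) ((1-x)*y) (z - x*y) (1-y-z+x*y)
  (t0 * Ind R true * (Ind R true - x) + t1 * (Ind R true - y) + t2 * (Ind R true - z))
  (t0 * Ind R true * (Ind R false - x) + t1 * (Ind R true - y) + t2 * (Ind R false - z))
  (t0 * Ind R false * (Ind R true - x) + t1 * (Ind R false - y) + t2 * (Ind R true - z))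
  (t0 * Ind R false * (Ind R false - x) + t1 * (Ind R false - y) + t2 * (Ind R false - z)).
have p1 : 0 <= x * y by nra.
have p2 : 0 <= (1 - x) * y by nra.
have p3 : 0 <= z - x * y by lra.
have p4 : 0 <= 1 - y - z + x * y by lra.
move/(_ p1 p2 p3 p4); move/(_ ltac:(lra)); move/(_ ltac:(rewrite /Ind; ring)).
case/or4P.
- by move=> h; exists true, true.
- by move=> h; exists true, false.
- by move=> h; exists false, true.
- by move=> h; exists false, false.
Qed.

Lemma exH (Omega : Type) (A B C : event Omega) (J : {set 'I_3}) w :
  [exists j in J, famH A B C j w] -> A w.
Proof.
case/existsP=> -[[|[|k]] hk] /andP[_]; rewrite /famH //=; by case/andP.
Qed.

Lemma ordcases (j : 'I_3) : [\/ j = ord0, j = inord 1 | j = inord 2].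
Proof.
case: j => -[|[|[|k]]] hk.
- by apply: Or31; apply: val_inj.
- by apply: Or32; apply: val_inj; rewrite /= inordK.
- by apply: Or33; apply: val_inj; rewrite /= inordK.
- by [].
Qed.

Lemma famP1 (R : realType) (x y z : R) : famP x y z (inord 1) = y.
Proof. by rewrite /famP /= inordK. Qed.
Lemma famP2 (R : realType) (x y z : R) : famP x y z (inord 2) = z.
Proof. by rewrite /famP /= inordK. Qed.
Lemma famP0 (R : realType) (x y z : R) : famP x y z ord0 = x.
Proof. by []. Qed.

Lemma part1 (R : realType) (Omega : Type) (A B C : event Omega) :
  logically_independent A B C ->
  forall x y z : R, 0 <= x <= 1 -> 0 <= y <= 1 ->
     (coherent (famE A B C) (famH A B C) (famP x y z)
      <-> x * y <= z <= x * y + 1 - y).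
Proof.
move=> LI x y z hx hy; split.
- case=> _ Hc.
  have J0 : [set: 'I_3] != set0 by apply/set0Pn; exists ord0; rewrite in_setT.
  apply/andP; split.
  + case: (lerP (x * y) z) => // hz.
    have [w /andP[hw hg]] := Hc setT (famP 1 x (-1)) J0.
    move: hg; rewrite gainE (exH _ _ _ _ _ _ hw) !in_setT famP0 famP1 famP2.
    move: hx hy => /andP[? ?] /andP[? ?].
    rewrite /Ind; case: (B w); case: (C w) => /=; nra.
  + case: (lerP z (x * y + 1 - y)) => // hz.
    have [w /andP[hw hg]] := Hc setT (famP (-1) (1 - x) 1) J0.
    move: hg; rewrite gainE (exH _ _ _ _ _ _ hw) !in_setT famP0 famP1 famP2.
    move: hx hy => /andP[? ?] /andP[? ?].
    rewrite /Ind; case: (B w); case: (C w) => /=; nra.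
- move=> hz; split.
  + move=> j; have [w /and3P[/eqP hA /eqP hB _]] := LI true true true.
    by exists w; case: (ordcases j) => ->; rewrite /famH /= ?inordK //= hA ?hB.
  + move=> J s /set0Pn [j0 hj0].
    set t0 := (if ord0 \in J then s ord0 else 0).
    set t1 := (if inord 1 \in J then s (inord 1) else 0).
    set t2 := (if inord 2 \in J then s (inord 2) else 0).
    case: (boolP ((inord 1 \in J) || (inord 2 \in J))) => h12.
    * have [b [c hk]] := @suff_key R x y z t0 t1 t2 hx hy hz.
      have [w /and3P[/eqP hA /eqP hB /eqP hC]] := LI true b c.
      exists w; apply/andP; split.
      - apply/existsP; case/orP: h12 => hj.
        + by exists (inord 1); rewrite hj /famH /= inordK.
        + by exists (inord 2); rewrite hj /famH /= inordK.
      - rewrite gainE -/t0 -/t1 -/t2 hA hB hC /=.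
        by move: hk; rewrite /Ind /= !mulr1.
    * have h0 : ord0 \in J.
        move: h12 hj0; case: (ordcases j0) => -> //.
        - by move=> /norP[/negPf -> _].
        - by move=> /norP[_ /negPf ->].
      have [c hc] : exists c : bool, 0 <= t0 * (Ind R c - x).
        move: hx => /andP[? ?]; case: (lerP 0 t0) => ht.
        - by exists true; rewrite /Ind; nra.
        - by exists false; rewrite /Ind; nra.
      have [w /and3P[/eqP hA /eqP hB /eqP hC]] := LI true true c.
      exists w; apply/andP; split.
      - by apply/existsP; exists ord0; rewrite h0 /famH /= hA hB.
      - move: h12 => /norP[/negPf h1 /negPf h2].
        rewrite gainE -/t0 /t1 /t2 h1 h2 hA hB hC /= !mul0r !addr0.
        by rewrite /Ind /= mulr1.
Qed.

Theorem mainTheorem3 (R : realType) (Omega : Type) (A B C : event Omega) :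
  logically_independent A B C ->
  (forall x y z : R, 0 <= x <= 1 -> 0 <= y <= 1 ->
     (coherent (famE A B C) (famH A B C) (famP x y z)
      <-> x * y <= z <= x * y + 1 - y)) /\
  (forall a1 b1 a2 b2 : R, 0 <= a1 -> a1 <= b1 -> b1 <= 1 ->
     0 <= a2 -> a2 <= b2 -> b2 <= 1 ->
     forall z : R,
       (exists x y : R, [/\ a1 <= x <= b1, a2 <= y <= b2 &
           coherent (famE A B C) (famH A B C) (famP x y z)])
       <-> a1 * a2 <= z <= b1 * a2 + 1 - a2).
Proof.
move=> LI; have P1 := @part1 R Omega A B C LI; split => //.
move=> a1 b1 a2 b2 ha1 hab1 hb1 ha2 hab2 hb2 z; split.
- case=> x [y [/andP[hx1 hx2] /andP[hy1 hy2] hc]].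
  have /P1 : 0 <= x <= 1 by apply/andP; split; lra.
  move=> /(_ y z) P; have /P : 0 <= y <= 1 by apply/andP; split; lra.
  case=> /(_ hc) /andP[hz1 hz2] _.
  apply/andP; split; nra.
- move=> /andP[hz1 hz2].
  case: (lerP z (a1 * a2 + 1 - a2)) => hz3.
  + exists a1, a2; split; try (apply/andP; split; lra).
    by apply/P1; apply/andP; split; lra.
  + have a2p : 0 < a2 by nra.
    set x := (z - 1 + a2) / a2.
    have hx : x * a2 = z - 1 + a2 by rewrite /x divfK // gt_eqF.
    have hx1 : a1 <= x by nra.
    have hx2 : x <= b1 by nra.
    exists x, a2; split; try (apply/andP; split; lra).
    by apply/P1; apply/andP; split; nra.
Qed.
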